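(* Let $f_j$, $j\in J=\{1,\dots,m\}$, be functions on $\mathbb{R}^n$, each strongly convex with constant $\mu_j>0$; let $D=\{x: f_j(x)\le 0,\ j\in J\}$ satisfy the Slater condition; let $f$ be a convex function attaining its minimum on $D$, such that no point of absolute minimum of $f$ on $\mathbb{R}^n$ (if one exists) lies in $\operatorname{int}D$. Let $x^*$ be the (unique) solution of $\min\{f(x):x\in D\}$, $F(x)=\max_{j\in J} f_j(x)$, $\mu=\min_{j\in J}\mu_j$, and for $\varepsilon\ge0$ let $D_\varepsilon=\{x\in\mathbb{R}^n: F(x)\le\varepsilon\}$. Let $\varepsilon>0$ and let $y\in D_\varepsilon$, $y\ne x^*$, be such that for every $\alpha\in(0,1]$ the point $z=\alpha y+(1-\alpha)x^*$ satisfies $F(z)>0$. Then $\|y-x^*\|\le\sqrt{\varepsilon/\mu}$.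
   Context: Each set $D_j=\{x:f_j(x)\le0\}$ is assumed to have nonempty interior. *)

(* Defs.v *)
From mathcomp Require Import all_boot all_order all_algebra.
From mathcomp Require Export reals.
Set Implicit Arguments. Unset Strict Implicit. Unset Printing Implicit Defensive.
Import Order.TTheory GRing.Theory Num.Theory.
Local Open Scope ring_scope.

Section Defs.
Variables (R : realType) (n : nat).

Definition enorm (v : 'rV[R]_n) : R := Num.sqrt (\sum_(i < n) v ord0 i ^+ 2).

Definition convexf (g : 'rV[R]_n -> R) : Prop :=
  forall x y (a : R), 0 <= a -> a <= 1 ->
    g (a *: x + (1 - a) *: y) <= a * g x + (1 - a) * g y.

(* strong convexity with constant mu (convention without the factor 1/2) *)
Definition strongly_convex (mu : R) (g : 'rV[R]_n -> R) : Prop :=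
  forall x y (a : R), 0 <= a -> a <= 1 ->
    g (a *: x + (1 - a) *: y)
      <= a * g x + (1 - a) * g y - mu * a * (1 - a) * enorm (x - y) ^+ 2.

Definition interior_pt (A : 'rV[R]_n -> Prop) (x : 'rV[R]_n) : Prop :=
  exists r : R, 0 < r /\ forall z, enorm (z - x) < r -> A z.

(* F(x) = max_j f_j(x) for the functions f_0,...,f_m (m+1 functions) *)
Definition Fmax (m : nat) (fs : 'I_m.+1 -> 'rV[R]_n -> R) (x : 'rV[R]_n) : R :=
  \big[Num.max/fs ord0 x]_(j < m.+1) fs j x.

Definition minmu (m : nat) (mus : 'I_m.+1 -> R) : R :=
  \big[Num.min/mus ord0]_(j < m.+1) mus j.

Definition Dset (m : nat) (fs : 'I_m.+1 -> 'rV[R]_n -> R) (x : 'rV[R]_n) : Prop :=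
  forall j, fs j x <= 0.

End Defs.

(* Main.v *)
Require Import Defs.
From mathcomp Require Import all_boot all_order all_algebra.
From mathcomp Require Import reals.
From mathcomp Require Import ring lra.
Import Order.TTheory GRing.Theory Num.Theory.
Local Open Scope ring_scope.

Lemma Fmax_ex (R : realType) (n m : nat) (fs : 'I_m.+1 -> 'rV[R]_n -> R) x :
  exists j, Fmax fs x = fs j x.
Proof.
rewrite /Fmax; apply: (big_ind (fun v => exists j, v = fs j x)).
- by exists ord0.
- move=> a b [i ->] [k ->]; rewrite maxEle; case: ifP => _; [by exists k | by exists i].
- by move=> i _; exists i.
Qed.

Theorem lemma1p1p6 (R : realType) (n m : nat)
  (fs : 'I_m.+1 -> 'rV[R]_n -> R) (mus : 'I_m.+1 -> R)
  (hmus : forall j, 0 < mus j)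
  (hsc : forall j, strongly_convex (mus j) (fs j))
  (hDj : forall j, exists x, interior_pt (fun z => fs j z <= 0) x)
  (hslater : exists x, forall j, fs j x < 0)
  (f : 'rV[R]_n -> R) (hf : convexf f)
  (xs : 'rV[R]_n) (hxsD : Dset fs xs)
  (hxsmin : forall x, Dset fs x -> f xs <= f x)
  (hnoint : forall x, (forall z, f x <= f z) -> ~ interior_pt (Dset fs) x)
  (eps : R) (heps : 0 < eps)
  (y : 'rV[R]_n) (hy : Fmax fs y <= eps) (hyx : y != xs)
  (hseg : forall a : R, 0 < a -> a <= 1 -> 0 < Fmax fs (a *: y + (1 - a) *: xs)) :
  enorm (y - xs) <= Num.sqrt (eps / minmu mus).
Proof.
set mu := minmu mus.
have mupos : 0 < mu.
  rewrite /mu /minmu; apply: (big_ind (fun v => 0 < v)) => //.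
  by move=> a b ha hb; rewrite lt_min ha hb.
have mule : forall j, mu <= mus j by move=> j; apply: bigmin_le.
have hyj : forall j, fs j y <= eps.
  by move=> j; apply: le_trans hy; apply: le_bigmax.
set e := enorm (y - xs).
have e0 : 0 <= e by apply: sqrtr_ge0.
set d2 := e ^+ 2.
have d20 : 0 <= d2 by rewrite /d2 exprn_ge0.
have key : mu * d2 <= eps.
  rewrite leNgt; apply/negP => hlt.
  set D := mu * d2.
  have D0 : 0 < D by apply: lt_trans hlt.
  set a := (D - eps) / (2 * D).
  have a0 : 0 < a by rewrite /a divr_gt0 // ?subr_gt0 // mulr_gt0.
  have aD : a * D = (D - eps) / 2 by rewrite /a; field; rewrite gt_eqF.
  have a1 : a <= 1.
    have : a * D <= D by rewrite aD; lra.
    by move=> h; rewrite -(ler_pM2r D0); lra.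
  have := hseg a a0 a1.
  case: (@Fmax_ex _ _ _ fs (a *: y + (1 - a) *: xs)) => j ->.
  move=> hpos.
  have := hsc j y xs a (ltW a0) a1.
  have := hyj j; have := hxsD j; have := mule j; have := hmus j.
  rewrite -/e -/d2.
  move=> h1 h2 h3 h4 h5.
  have t1 : a * fs j y <= a * eps by rewrite ler_pM2l.
  have t2 : (1 - a) * fs j xs <= 0 by rewrite mulr_ge0_le0 // subr_ge0.
  have t3 : mu * (a * (1 - a) * d2) <= mus j * (a * (1 - a) * d2).
    by rewrite ler_wpM2r // mulr_ge0 // mulr_ge0 ?subr_ge0 // ltW.
  have : 0 < a * eps - a * (1 - a) * D.
    rewrite /D; move: hpos h5 t1 t2 t3; clear; move: (fs j _) (fs j y) (fs j xs) (mus j) => p q r s; lra.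
  have -> : a * eps - a * (1 - a) * D = a * (eps - D + a * D) by ring.
  rewrite aD pmulr_rgt0 // /D; lra.
have hd2 : d2 <= eps / mu by rewrite ler_pdivlMr // mulrC.
have -> : e = Num.sqrt d2 by rewrite /d2 sqrtr_sqr ger0_norm.
by rewrite ler_sqrt // divr_ge0 // ltW.
Qed.
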